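(* Let $n\ge2$ and $x=(x_1,\dots,x_n)\in\mathbb R^n$ with $x_i\ne0$ for all $i$ and $x_1+\dots+x_n=0$. Then $$\sum_{\substack{\sigma\in S_n\\ \pi_\sigma(x)\text{ allowed}}}G_n(\pi_\sigma(x))=0.$$
   Context: $S_n$ is the symmetric group on $\{1,\dots,n\}$, $\pi_\sigma(x)=(x_{\sigma(1)},\dots,x_{\sigma(n)})$. For $y\in\mathbb R^n$, $D_i(y)=y_1+\dots+y_i$; $y$ is called allowed if $D_i(y)\ne0$ for all $i=1,\dots,n-1$, and then $G_n(y)=\prod_{i=1}^{n-1}D_i(y)^{-1}$. *)

(* Defs.v *)
From mathcomp Require Import all_boot all_order all_algebra all_fingroup.
Set Implicit Arguments. Unset Strict Implicit. Unset Printing Implicit Defensive.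
Import Order.TTheory GRing.Theory Num.Theory.
Local Open Scope ring_scope.

(* Vectors in R^n are functions 'I_n -> R; coordinate k (0-based) is the
   paper's coordinate k+1. *)

Definition pi_perm (R : Type) (n : nat) (s : 'S_n) (x : 'I_n -> R) : 'I_n -> R :=
  fun k => x (s k).

Definition Dsum (R : realFieldType) (n : nat) (i : nat) (y : 'I_n -> R) : R :=
  \sum_(j < n | (j < i)%N) y j.

Definition allowed (R : realFieldType) (n : nat) (y : 'I_n -> R) : bool :=
  [forall i : 'I_n, (0 < i)%N ==> (Dsum i y != 0)].

Definition Gn (R : realFieldType) (n : nat) (y : 'I_n -> R) : R :=
  \prod_(1 <= i < n) (Dsum i y)^-1.

(* Main.v *)
Require Import Defs.
From mathcomp Require Import all_boot all_order all_algebra all_fingroup.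
From mathcomp Require Import ring lra.
Set Implicit Arguments. Unset Strict Implicit. Unset Printing Implicit Defensive.
Import Order.TTheory GRing.Theory Num.Theory.
Local Open Scope ring_scope.

Section Main.
Variable R : realFieldType.

Definition reg (f : R -> R) (v : R) :=
  exists (p q : {poly R}) (bad : seq R), q.[0] != 0 /\ v = p.[0] / q.[0] /\
    forall t, t \notin bad -> q.[t] != 0 -> f t = p.[t] / q.[t].

Lemma reg_ext f g v (bad0 : seq R) :
  (forall t, t \notin bad0 -> f t = g t) -> reg g v -> reg f v.
Proof.
move=> fg [p [q [bad [q0 [-> H]]]]]; exists p, q, (bad0 ++ bad); split=> //; split=> //.
move=> t; rewrite mem_cat negb_or => /andP[t1 t2] qt.
by rewrite fg // H.
Qed.

Lemma reg_const c : reg (fun _ => c) c.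
Proof.
exists c%:P, 1, [::]; rewrite !hornerC oner_eq0 divr1; split=> //; split=> //.
by move=> t _ _; rewrite !hornerC divr1.
Qed.

Lemma reg_add f g a b : reg f a -> reg g b -> reg (fun t => f t + g t) (a + b).
Proof.
move=> [p1 [q1 [b1 [q10 [-> H1]]]]] [p2 [q2 [b2 [q20 [-> H2]]]]].
exists (p1 * q2 + p2 * q1), (q1 * q2), (b1 ++ b2).
rewrite !(hornerD, hornerM) mulf_neq0 //; split=> //; split.
  by field; apply/andP; split.
move=> t; rewrite mem_cat negb_or => /andP[t1 t2]; rewrite !(hornerD, hornerM) => qt.
have q1t : q1.[t] != 0 by move: qt; rewrite mulf_eq0 negb_or => /andP[].
have q2t : q2.[t] != 0 by move: qt; rewrite mulf_eq0 negb_or => /andP[].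
rewrite H1 // H2 //; field; by apply/andP; split.
Qed.

Lemma reg_mul f g a b : reg f a -> reg g b -> reg (fun t => f t * g t) (a * b).
Proof.
move=> [p1 [q1 [b1 [q10 [-> H1]]]]] [p2 [q2 [b2 [q20 [-> H2]]]]].
exists (p1 * p2), (q1 * q2), (b1 ++ b2).
rewrite !(hornerD, hornerM) mulf_neq0 //; split=> //; split.
  by field; apply/andP; split.
move=> t; rewrite mem_cat negb_or => /andP[t1 t2]; rewrite !(hornerD, hornerM) => qt.
have q1t : q1.[t] != 0 by move: qt; rewrite mulf_eq0 negb_or => /andP[].
have q2t : q2.[t] != 0 by move: qt; rewrite mulf_eq0 negb_or => /andP[].
rewrite H1 // H2 //; field; by apply/andP; split.
Qed.

Lemma reg_sum (I : Type) (r : seq I) (P : pred I) (F : I -> R -> R) (v : I -> R) :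
  (forall j, P j -> reg (F j) (v j)) ->
  reg (fun t => \sum_(j <- r | P j) F j t) (\sum_(j <- r | P j) v j).
Proof.
move=> H; elim: r => [|j r IH].
  rewrite big_nil; apply: (@reg_ext _ _ _ [::] _ (reg_const 0)) => t _; by rewrite big_nil.
rewrite big_cons; case: ifP => Pj.
  apply: (@reg_ext _ _ _ [::] _ (reg_add (H j Pj) IH)) => t _; by rewrite big_cons Pj.
by apply: (@reg_ext _ _ _ [::] _ IH) => t _; rewrite big_cons Pj.
Qed.

Lemma reg_inv_lin a b : a != 0 -> reg (fun t => (a + t * b)^-1) a^-1.
Proof.
move=> a0; exists 1, (b%:P * 'X + a%:P), [::].
rewrite hornerMXaddC !hornerE; split=> //; split=> //.
by move=> t _ _; rewrite hornerMXaddC !hornerE addrC mulrC.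
Qed.

Lemma reg_divt f k : reg f 0 -> k != 0 -> exists w, reg (fun t => f t * (t * k)^-1) w.
Proof.
move=> [p [q [bad [q0 [v0 H]]]]] k0.
have p0 : root p 0.
  by move: v0 => /esym/eqP; rewrite mulf_eq0 invr_eq0 (negPf q0) orbF.
have Dp : p = (p %/ ('X - 0%:P)) * ('X - 0%:P) by rewrite divpK // dvdp_XsubCl.
set p' := p %/ ('X - 0%:P) in Dp.
exists (p'.[0] / (q.[0] * k)), p', (q * k%:P), (0 :: bad).
rewrite !hornerE mulf_neq0 //; split=> //; split=> //.
move=> t; rewrite in_cons negb_or => /andP[t0 tb]; rewrite !hornerE => qt.
have qt' : q.[t] != 0 by move: qt; rewrite mulf_eq0 negb_or => /andP[].
rewrite H // Dp !hornerE subr0; field.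
by rewrite qt' k0 t0.
Qed.

Lemma poly_all_zero (P : {poly R}) : (forall t, P.[t] = 0) -> P = 0.
Proof.
move=> H; apply/eqP; apply/negPn/negP => P0.
set rs := [seq i%:R | i <- iota 0 (size P)] : seq R.
have H1 : all (root P) rs by apply/allP => z /mapP[i _ ->]; apply/rootP; apply: H.
have H2 : uniq rs.
  rewrite map_inj_uniq ?iota_uniq // => i j /eqP; rewrite eqr_nat => /eqP //.
by have := max_poly_roots P0 H1 H2; rewrite size_map size_iota ltnn.
Qed.

Lemma prodXsub_neq0 (s : seq R) : \prod_(b <- s) ('X - b%:P) != 0.
Proof.
elim: s => [|b s IH]; first by rewrite big_nil oner_eq0.
by rewrite big_cons mulf_neq0 // polyXsubC_eq0.
Qed.

Lemma prodXsub_root (s : seq R) t : t \in s -> (\prod_(b <- s) ('X - b%:P)).[t] = 0.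
Proof.
elim: s => [|b s IH] //; rewrite in_cons big_cons hornerM => /orP[/eqP->|/IH->].
  by rewrite !hornerE subrr mul0r.
by rewrite mulr0.
Qed.

Lemma reg_zero_uniq f v (bad' : seq R) :
  reg f v -> (forall t, t \notin bad' -> f t = 0) -> v = 0.
Proof.
move=> [p [q [bad [q0 [-> H]]]]] Hz.
set Z := \prod_(b <- bad ++ bad') ('X - b%:P).
have Z0 : Z != 0 by apply: prodXsub_neq0.
have : p * q * Z = 0.
  apply: poly_all_zero => t; rewrite !hornerE.
  case tb: (t \in bad ++ bad').
    by rewrite /Z prodXsub_root // mulr0.
  move: tb; rewrite mem_cat => /negbT; rewrite negb_or => /andP[t1 t2].
  case qt: (q.[t] == 0); first by rewrite (eqP qt) mulr0 mul0r.
  have := Hz t t2; rewrite H ?qt // => /eqP; rewrite mulf_eq0 invr_eq0 qt orbF => /eqP ->.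
  by rewrite !mul0r.
move/eqP; rewrite !mulf_eq0 (negPf Z0) orbF => /orP[/eqP->|/eqP q00].
  by rewrite horner0 mul0r.
by move: q0; rewrite q00 horner0 eqxx.
Qed.



Variable n : nat.
Implicit Types (A B : {set 'I_n}).

Lemma sum_pairs (F : 'I_n -> {set 'I_n} -> R) A :
  \sum_(j in A) \sum_(B : {set 'I_n} | B \subset A :\ j) F j B =
  \sum_(B : {set 'I_n} | B \subset A) \sum_(j in B) F j (B :\ j).
Proof.
rewrite [RHS](eq_bigr (fun B => \sum_(j in A | j \in B) F j (B :\ j))); last first.
  move=> B sBA; apply: eq_bigl => j; case jB: (j \in B); last by rewrite andbF.
  by rewrite andbT (subsetP sBA).
rewrite (exchange_big_dep (mem A)) /=; last by move=> B j _ /andP[].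
apply: eq_bigr => j jA.
rewrite [RHS](reindex_onto (fun B' => j |: B') (fun B => B :\ j)) /=; last first.
  by move=> B /and3P[_ _ jB]; rewrite setD1K.
apply: eq_big => B'.
  rewrite subUset sub1set jA setU11 /= andbT subsetD1.
  case jB: (j \in B').
    rewrite /= andbF; apply/esym/negbTE.
    by apply/negP => /andP[_ /eqP E]; move: jB; rewrite -E setD11.
  by rewrite /= setU1K ?jB // eqxx.
by rewrite subsetD1 => /andP[_ jB]; rewrite setU1K.
Qed.

Variable x : 'I_n -> R.

Fixpoint ordF (y : 'I_n -> R) (k : nat) (A : {set 'I_n}) (c : R) : R :=
  if k is k'.+1 then \sum_(j in A) c^-1 * ordF y k' (A :\ j) (c + y j) else 1.
Definition Ord y A c := ordF y #|A| A c.

Fixpoint blkF (K : {set 'I_n} -> R -> R) (y : 'I_n -> R) (k : nat)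
   (A : {set 'I_n}) (c0 c : R) : R :=
  if k is k'.+1 then
    \sum_(j in A) c^-1 * (if c0 + x j == 0 then K (A :\ j) (c + y j)
                          else blkF K y k' (A :\ j) (c0 + x j) (c + y j))
  else 0.
Definition Blk K y A c0 c := blkF K y #|A| A c0 c.

Definition E (A : {set 'I_n}) (_ : R) : R := (A == set0)%:R.

Lemma Ord_rec y A c : A != set0 ->
  Ord y A c = \sum_(j in A) c^-1 * Ord y (A :\ j) (c + y j).
Proof.
move=> A0; rewrite /Ord; case EA: #|A| => [|k].
  by move: A0; rewrite -cards_eq0 EA.
apply: eq_bigr => j jA; congr (_ * _).
rewrite (_ : #|A :\ j| = k) //; move: EA; rewrite (cardsD1 j) jA add1n; by case.
Qed.

Lemma Ord0 y c : Ord y set0 c = 1.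
Proof. by rewrite /Ord cards0. Qed.

Lemma Blk_rec K y A c0 c :
  Blk K y A c0 c = \sum_(j in A) c^-1 * (if c0 + x j == 0 then K (A :\ j) (c + y j)
                          else Blk K y (A :\ j) (c0 + x j) (c + y j)).
Proof.
rewrite /Blk; case EA: #|A| => [|k].
  by move: EA => /eqP; rewrite cards_eq0 => /eqP ->; rewrite big_set0.
apply: eq_bigr => j jA; congr (_ * _); case: ifP => // _.
rewrite /Blk (_ : #|A :\ j| = k) //; move: EA; rewrite (cardsD1 j) jA add1n; by case.
Qed.

Lemma Ord_Blk y A c0 c : c0 != 0 -> c0 + \sum_(i in A) x i = 0 ->
  Ord y A c = Blk (Ord y) y A c0 c.
Proof.
move: (leqnn #|A|); move: {2}#|A| => k.
elim: k A c0 c => [|k IH] A c0 c hA c00 hs.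
  move: hA; rewrite leqn0 cards_eq0 => /eqP A0.
  by move: hs c00; rewrite A0 big_set0 addr0 => ->; rewrite eqxx.
have A0 : A != set0.
  apply/negP => /eqP A0; move: hs c00; by rewrite A0 big_set0 addr0 => ->; rewrite eqxx.
rewrite Ord_rec // Blk_rec; apply: eq_bigr => j jA; congr (_ * _).
case: ifP => // /negbT cj; apply: IH => //.
  by move: hA; rewrite (cardsD1 j) jA.
by rewrite -addrA -big_setD1.
Qed.

Lemma BlkE_zero y A c0 c : c0 + \sum_(i in A) x i != 0 -> Blk E y A c0 c = 0.
Proof.
move: (leqnn #|A|); move: {2}#|A| => k.
elim: k A c0 c => [|k IH] A c0 c hA hs.
  move: hA; rewrite leqn0 cards_eq0 => /eqP ->.
  by rewrite Blk_rec big_set0.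
rewrite Blk_rec big1 // => j jA; case: ifP => cj.
  rewrite /E; case: eqP => [A1|]; last by rewrite mulr0.
  by move: hs; rewrite (big_setD1 j) //= A1 big_set0 addr0 (eqP cj) eqxx.
rewrite IH ?mulr0 //.
  by move: hA; rewrite (cardsD1 j) jA.
by rewrite -addrA -big_setD1.
Qed.

Lemma Blk_lin K y A c0 c :
  Blk K y A c0 c = \sum_(B : {set 'I_n} | B \subset A)
                      Blk E y B c0 c * K (A :\: B) (c + \sum_(i in B) y i).
Proof.
move: (leqnn #|A|); move: {2}#|A| => k.
elim: k A c0 c => [|k IH] A c0 c hA.
  move: hA; rewrite leqn0 cards_eq0 => /eqP ->.
  rewrite Blk_rec big_set0 big1 // => B; rewrite subset0 => /eqP ->.
  by rewrite Blk_rec big_set0 mul0r.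
pose F j B' := c^-1 * (if c0 + x j == 0 then E B' (c + y j)
                       else Blk E y B' (c0 + x j) (c + y j)) *
               K (A :\ j :\: B') (c + y j + \sum_(i in B') y i).
rewrite (eq_bigr (fun B => \sum_(j in B) F j (B :\ j))); last first.
  move=> B sBA; rewrite Blk_rec mulr_suml; apply: eq_bigr => j jB.
  rewrite /F setDDl setD1K // -addrA -big_setD1 //.
rewrite -sum_pairs Blk_rec; apply: eq_bigr => j jA.
rewrite /F; case: ifP => cj.
  rewrite (bigD1 set0) ?sub0set //= big_set0 addr0 {1}/E eqxx mulr1 setD0 big1 ?addr0 //.
  by move=> B /andP[_ /negPf B0]; rewrite /E B0 mulr0 mul0r.
rewrite (IH (A :\ j)); last by move: hA; rewrite (cardsD1 j) jA.
rewrite mulr_sumr; apply: eq_bigr => B _; by rewrite mulrA.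
Qed.

Lemma Ord_gen y A c :
  (forall B, B \subset A -> B != set0 -> \sum_(i in B) y i != 0) ->
  c + \sum_(i in A) y i = 0 ->
  Ord y A c = (-1) ^+ #|A| / \prod_(i in A) y i.
Proof.
move: (leqnn #|A|); move: {2}#|A| => k.
elim: k A c => [|k IH] A c hA hB hs.
  move: hA; rewrite leqn0 cards_eq0 => /eqP ->.
  by rewrite Ord0 cards0 big_set0 expr0 divr1.
case: (eqVneq A set0) => [->|A0].
  by rewrite Ord0 cards0 big_set0 expr0 divr1.
have yn0 : forall j, j \in A -> y j != 0.
  move=> j jA; have := hB [set j]; rewrite sub1set jA big_set1; apply=> //.
  by apply/set0Pn; exists j; rewrite set11.
have P0 : \prod_(i in A) y i != 0 by apply/prodf_neq0 => i /yn0.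
have c0 : c != 0.
  apply/negP => /eqP c0; move: hs; rewrite c0 add0r => /eqP; apply/negP; exact: hB.
have kA : (0 < #|A|)%N by rewrite card_gt0.
rewrite Ord_rec //.
rewrite (eq_bigr (fun j => (c^-1 * (-1) ^+ #|A|.-1 / \prod_(i in A) y i) * y j)); last first.
  move=> j jA; rewrite IH; first last.
  - by rewrite -addrA -big_setD1.
  - by move=> B sB; apply: hB; apply: subset_trans sB (subD1set _ _).
  - by move: hA; rewrite (cardsD1 j) jA.
  have P1 : \prod_(i in A :\ j) y i != 0 by apply/prodf_neq0 => i; rewrite in_setD1 => /andP[_ /yn0].
  rewrite [\prod_(i in A) y i](big_setD1 j jA) [#|A|](cardsD1 j) jA add1n /=; field.
  by rewrite c0 P1 yn0.
rewrite -mulr_sumr.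
have -> : \sum_(i in A) y i = - c by apply/eqP; rewrite -addr_eq0 addrC hs.
rewrite -[in RHS](prednK kA) exprS; field.
by rewrite c0 P0.
Qed.

Lemma Blk_reg u A c0 g : c0 != 0 ->
  reg (fun t => Blk E (fun i => x i + t * u i) A c0 (c0 + t * g)) (Blk E x A c0 c0).
Proof.
move: (leqnn #|A|); move: {2}#|A| => k.
elim: k A c0 g => [|k IH] A c0 g hA c00.
  move: hA; rewrite leqn0 cards_eq0 => /eqP ->.
  rewrite Blk_rec big_set0; apply: (@reg_ext _ _ _ [::] _ (reg_const 0)) => t _.
  by rewrite Blk_rec big_set0.
rewrite Blk_rec.
pose F j t := (c0 + t * g)^-1 * (if c0 + x j == 0 then E (A :\ j) (c0 + t * g + (x j + t * u j))
     else Blk E (fun i => x i + t * u i) (A :\ j) (c0 + x j) (c0 + t * g + (x j + t * u j))).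
pose v j := c0^-1 * (if c0 + x j == 0 then E (A :\ j) (c0 + x j)
     else Blk E x (A :\ j) (c0 + x j) (c0 + x j)).
have := @reg_sum 'I_n (index_enum 'I_n) (fun j => j \in A) F v.
move=> H; apply: (@reg_ext _ _ _ [::] _ (H _)).
  by move=> t _; rewrite Blk_rec.
move=> j jA; apply: reg_mul; first exact: reg_inv_lin.
case: ifP => cj; first exact: reg_const.
apply: (@reg_ext _ (fun t => Blk E (fun i => x i + t * u i) (A :\ j) (c0 + x j) ((c0 + x j) + t * (g + u j))) _ [::]).
  by move=> t _; congr Blk; ring.
apply: IH; last by rewrite cj.
by move: hA; rewrite (cardsD1 j) jA.
Qed.

Definition FullR y A g := \sum_(j in A) Ord y (A :\ j) (g + y j).
Definition Gam y B g := \sum_(j in B) Blk E y (B :\ j) (x j) (g + y j).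

Lemma decomp y A g : (forall i, x i != 0) -> \sum_(i in A) x i = 0 ->
  FullR y A g = \sum_(B : {set 'I_n} | B \subset A)
     Gam y B g * Ord y (A :\: B) (g + \sum_(i in B) y i).
Proof.
move=> xn0 hs.
rewrite /FullR (eq_bigr (fun j => \sum_(B : {set 'I_n} | B \subset A :\ j)
   (Blk E y B (x j) (g + y j) * Ord y (A :\ j :\: B) (g + y j + \sum_(i in B) y i)))); last first.
  move=> j jA; rewrite (@Ord_Blk _ _ (x j)) //; first exact: Blk_lin.
  by rewrite -big_setD1.
rewrite sum_pairs; apply: eq_bigr => B sBA.
rewrite /Gam mulr_suml; apply: eq_bigr => j jB.
by rewrite setDDl setD1K // -addrA -big_setD1.
Qed.

Definition Q B := \sum_(j in B) Blk E x (B :\ j) (x j) (x j).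
Definition yt (u : 'I_n -> R) (t : R) := fun i => x i + t * u i.

Lemma Gam_reg u B g : (forall i, x i != 0) ->
  reg (fun t => Gam (yt u t) B (t * g)) (Q B).
Proof.
have := @reg_sum 'I_n (index_enum 'I_n) (fun j => j \in B)
  (fun j t => Blk E (yt u t) (B :\ j) (x j) (x j + t * (g + u j)))
  (fun j => Blk E x (B :\ j) (x j) (x j)).
move=> H xn0; apply: (@reg_ext _ _ _ [::] _ (H _)).
  move=> t _; rewrite /Gam; apply: eq_bigr => j _; congr Blk; rewrite /yt; ring.
by move=> j jB; apply: Blk_reg.
Qed.

Lemma Gam_zero y B g : \sum_(i in B) x i != 0 -> Gam y B g = 0.
Proof.
move=> hB; rewrite /Gam big1 // => j jB; apply: BlkE_zero.
by rewrite -big_setD1.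
Qed.

Lemma sum_split (f : 'I_n -> R) A B : B \subset A ->
  \sum_(i in A) f i = \sum_(i in B) f i + \sum_(i in A :\: B) f i.
Proof. by move=> sBA; rewrite (big_setID B) (setIidPr sBA). Qed.

Lemma sum_yt u t B : \sum_(i in B) yt u t i = \sum_(i in B) x i + t * \sum_(i in B) u i.
Proof. by rewrite /yt big_split mulr_sumr. Qed.

Lemma Ord_Full y A c : A != set0 -> Ord y A c = c^-1 * FullR y A c.
Proof. by move=> A0; rewrite Ord_rec // /FullR mulr_sumr. Qed.

Lemma inner (xn0 : forall i, x i != 0) (S : {set 'I_n}) (u : 'I_n -> R)
  (IHm : forall B, (#|B| < #|S|)%N -> \sum_(i in B) x i = 0 -> Q B = 0)
  (ug : forall B, B \subset S -> B != set0 -> B != S -> \sum_(i in B) u i != 0) :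
  forall A, A \subset S -> \sum_(i in A) x i = 0 ->
  reg (fun t => FullR (yt u t) A (t * - \sum_(i in A) u i)) (Q A).
Proof.
move=> A; move: (leqnn #|A|); move: {2}#|A| => k.
elim: k A => [|k IH] A hA sAS xA.
  move: hA; rewrite leqn0 cards_eq0 => /eqP ->.
  have -> : Q set0 = 0 by rewrite /Q big_set0.
  apply: (@reg_ext _ _ _ [::] _ (reg_const 0)) => t _.
  by rewrite /FullR big_set0.
have -> : Q A = \sum_(B : {set 'I_n} | B \subset A) (if B == A then Q A else 0).
  rewrite (bigD1 A) //= eqxx big1 ?addr0 // => B /andP[_ /negPf ->] //.
apply: (@reg_ext _ _ _ [::] _ (reg_sum _ _)).
  by move=> t _; rewrite decomp.
move=> B sBA /=; case: eqP => [->|/eqP BA].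
  rewrite -[Q A]mulr1; apply: reg_mul; first exact: Gam_reg.
  apply: (@reg_ext _ _ _ [::] _ (reg_const 1)) => t _.
  by rewrite setDv Ord0.
case: (eqVneq (\sum_(i in B) x i) 0) => xB; last first.
  apply: (@reg_ext _ _ _ [::] _ (reg_const 0)) => t _.
  by rewrite Gam_zero // mul0r.
case: (eqVneq B set0) => B0.
  apply: (@reg_ext _ _ _ [::] _ (reg_const 0)) => t _.
  by rewrite B0 /Gam big_set0 mul0r.
set A' := A :\: B.
have sA'A : A' \subset A by apply: subsetDl.
have A'0 : A' != set0.
  by rewrite /A' setD_eq0; apply: contra BA => sAB; rewrite eqEsubset sBA sAB.
have cB : (#|B| < #|A|)%N by rewrite proper_card // properEneq BA sBA.
have cA' : (#|A'| < #|A|)%N.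
  rewrite proper_card // properEneq sA'A andbT; apply: contra B0 => /eqP E.
  apply/eqP/setP => i; rewrite in_set0; apply/negP => iB.
  have : i \in A' by rewrite E (subsetP sBA).
  by rewrite in_setD iB.
have xA' : \sum_(i in A') x i = 0 by move: xA; rewrite (sum_split _ sBA) xB add0r.
have sA'S : A' \subset S by apply: subset_trans sA'A sAS.
have A'S : A' != S.
  case/set0Pn: B0 => b bB; apply/negP => /eqP E.
  have : b \in A' by rewrite E (subsetP sAS) // (subsetP sBA).
  by rewrite in_setD bB.
have kap : - \sum_(i in A') u i != 0 by rewrite oppr_eq0; apply: ug.
have QB : Q B = 0 by apply: IHm => //; apply: leq_trans cB (subset_leq_card sAS).
have QA' : Q A' = 0 by apply: IHm => //; apply: leq_trans cA' (subset_leq_card sAS).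
have := Gam_reg u B (- \sum_(i in A) u i) xn0; rewrite QB => HG.
have [w Hw] := reg_divt HG kap.
have cA'k : (#|A'| <= k)%N by rewrite -ltnS; apply: leq_trans cA' hA.
have HF := IH A' cA'k sA'S xA'; rewrite QA' in HF.
have := reg_mul Hw HF; rewrite mulr0 => HM.
apply: (@reg_ext _ _ _ [::] _ HM) => t _ /=; rewrite -mulrA; congr (_ * _).
have -> : t * - \sum_(i in A) u i + \sum_(i in B) yt u t i = t * - \sum_(i in A') u i.
  rewrite sum_yt xB add0r (sum_split u sBA) -/A'; ring.
by rewrite Ord_Full.
Qed.

Lemma mainQ (xn0 : forall i, x i != 0) (S : {set 'I_n}) : \sum_(i in S) x i = 0 -> Q S = 0.
Proof.
move: (leqnn #|S|); move: {2}#|S| => k.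
elim: k S => [|k IHk] S hS xS.
  by move: hS; rewrite leqn0 cards_eq0 => /eqP ->; rewrite /Q big_set0.
have IHm : forall B, (#|B| < #|S|)%N -> \sum_(i in B) x i = 0 -> Q B = 0.
  move=> B hB; apply: IHk; rewrite -ltnS; exact: leq_trans hB hS.
case: (leqP #|S| 1) => cS.
  rewrite /Q big1 // => j jS; rewrite Blk_rec.
  have : #|S :\ j| = 0%N by move: cS; rewrite (cardsD1 j) jS add1n ltnS leqn0 => /eqP.
  by move/eqP; rewrite cards_eq0 => /eqP ->; rewrite big_set0.
have [j0 j0S] : exists j0, j0 \in S by apply/set0Pn; rewrite -card_gt0; apply: ltnW.
pose u i : R := (i \in S)%:R - (i == j0)%:R * #|S|%:R.
have uB : forall B, B \subset S -> \sum_(i in B) u i = #|B|%:R - (j0 \in B)%:R * #|S|%:R.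
  move=> B sBS; rewrite /u sumrB; congr (_ - _).
    rewrite (eq_bigr (fun _ => 1)); first by rewrite sumr_const.
    by move=> i iB; rewrite (subsetP sBS).
  case j0B: (j0 \in B).
    rewrite (big_setD1 j0) //= eqxx big1 ?addr0 // => i; rewrite in_setD1 => /andP[/negPf -> _].
    by rewrite mul0r.
  rewrite big1 ?mul0r // => i iB; case: eqP => [E|_]; last by rewrite mul0r.
  by move: j0B; rewrite -E iB.
have uS : \sum_(i in S) u i = 0 by rewrite uB // j0S mul1r subrr.
have ug : forall B, B \subset S -> B != set0 -> B != S -> \sum_(i in B) u i != 0.
  move=> B sBS B0 BS; rewrite uB //; case: (j0 \in B); last first.
    by rewrite mul0r subr0 pnatr_eq0 cards_eq0.
  rewrite mul1r subr_eq0 eqr_nat; apply/negP => /eqP cB.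
  by move: BS; rewrite eqEcard sBS cB leqnn.
have HS := inner xn0 IHm ug (subxx S) xS.
pose bad := [seq - (\sum_(i in B) x i) / (\sum_(i in B) u i) | B : {set 'I_n}].
apply: (reg_zero_uniq (bad' := bad) HS) => t tb.
have gen : forall B, B \subset S -> B != set0 -> B != S -> \sum_(i in B) yt u t i != 0.
  move=> B sBS B0 BS; rewrite sum_yt; apply/negP => /eqP E.
  have uB0 := ug B sBS B0 BS.
  move: tb; have -> : t = - (\sum_(i in B) x i) / (\sum_(i in B) u i).
    have Ex : \sum_(i in B) x i = - (t * \sum_(i in B) u i).
      by apply/eqP; rewrite -addr_eq0 E.
    by rewrite Ex opprK mulfK.
  by move/negP; apply; rewrite /bad; apply: image_f.
rewrite uS oppr0 mulr0.
set y := yt u t.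
have yj : forall j, j \in S -> y j != 0.
  move=> j jS; have := gen [set j]; rewrite big_set1; apply.
  - by rewrite sub1set.
  - by apply/set0Pn; exists j; rewrite set11.
  - by apply/negP => /eqP E; move: cS; rewrite -E cards1.
have yS : \sum_(i in S) y i = 0 by rewrite /y sum_yt xS uS mulr0 addr0.
have P0 : forall A, A \subset S -> \prod_(i in A) y i != 0.
  by move=> A sAS; apply/prodf_neq0 => i iA; apply: yj; apply: (subsetP sAS).
rewrite /FullR (eq_bigr (fun j => ((-1) ^+ #|S|.-1 / \prod_(i in S) y i) * y j)).
  by rewrite -mulr_sumr yS mulr0.
move=> j jS.
have sub : S :\ j \subset S by apply: subD1set.
have -> : Ord y (S :\ j) (0 + y j) = (-1) ^+ #|S :\ j| / \prod_(i in S :\ j) y i.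
  apply: Ord_gen; last by rewrite add0r -big_setD1.
  move=> B sB B0; apply: gen => //; first by apply: subset_trans sB sub.
  apply/negP => /eqP E; move: sB; rewrite E => /subsetP /(_ j jS).
  by rewrite setD11.
have P1 := P0 _ sub; have yj0 := yj j jS.
rewrite [\prod_(i in S) y i](big_setD1 j jS) [#|S|](cardsD1 j) jS add1n /=; field.
by rewrite P1 yj0.
Qed.

Lemma perms_sum (T : eqType) (r : seq T) (F : seq T -> R) : uniq r -> r != [::] ->
  \sum_(w <- permutations r) F w = \sum_(j <- r) \sum_(w <- permutations (rem j r)) F (j :: w).
Proof.
move=> ur r0; rewrite (perm_big _ (permutationsE _)); last by case: (r) r0.
by rewrite undup_id // big_allpairs_dep.
Qed.

Lemma perms_perm (T : eqType) (r1 r2 : seq T) (F : seq T -> R) : perm_eq r1 r2 ->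
  \sum_(w <- permutations r1) F w = \sum_(w <- permutations r2) F w.
Proof. by move=> p; apply: perm_big; apply: perm_permutations. Qed.

Lemma rem_enum A j : perm_eq (rem j (enum A)) (enum (A :\ j)).
Proof.
apply: uniq_perm; first by apply: rem_uniq; apply: enum_uniq.
  exact: enum_uniq.
by move=> i; rewrite (mem_rem_uniq _ (enum_uniq _)) inE !mem_enum in_setD1.
Qed.

Fixpoint bwi (c : R) (w : seq 'I_n) : R :=
  if w is j :: w' then c^-1 * (if c + x j == 0 then (w' == [::])%:R else bwi (c + x j) w')
  else 0.

Lemma stop_sum B : \sum_(w <- permutations (enum B)) (w == [::])%:R = (B == set0)%:R :> R.
Proof.
case: (eqVneq B set0) => [->|B0]; first by rewrite enum_set0 big_seq1.
rewrite big1_seq // => w /andP[_]; rewrite mem_permutations => /perm_size.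
rewrite -cardE => sw; case: w sw => //= sw.
by move: B0; rewrite -cards_eq0 -sw.
Qed.

Lemma Blk_perm A c : Blk E x A c c = \sum_(w <- permutations (enum A)) bwi c w.
Proof.
move: (leqnn #|A|); move: {2}#|A| => k.
elim: k A c => [|k IH] A c hA.
  move: hA; rewrite leqn0 cards_eq0 => /eqP ->.
  by rewrite Blk_rec big_set0 enum_set0 big_seq1.
case: (eqVneq A set0) => [->|A0].
  by rewrite Blk_rec big_set0 enum_set0 big_seq1.
have eA : enum A != [::] by apply/eqP => E0; move: A0; rewrite -cards_eq0 cardE E0.
rewrite perms_sum ?enum_uniq //.
rewrite Blk_rec -big_enum big_seq [RHS]big_seq; apply: eq_bigr => j; rewrite mem_enum => jA /=.
rewrite -mulr_sumr; congr (_ * _).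
rewrite (perms_perm _ (rem_enum A j)).
case: ifP => cj; first by rewrite stop_sum.
rewrite IH //; move: hA; by rewrite (cardsD1 j) jA.
Qed.

Definition topF (w : seq 'I_n) : R := if w is j :: w' then bwi (x j) w' else 0.

Lemma Q_perm A : Q A = \sum_(w <- permutations (enum A)) topF w.
Proof.
case: (eqVneq A set0) => [->|A0].
  by rewrite /Q big_set0 enum_set0 big_seq1.
have eA : enum A != [::] by apply/eqP => E0; move: A0; rewrite -cards_eq0 cardE E0.
rewrite perms_sum ?enum_uniq //.
rewrite /Q -big_enum; apply: eq_bigr => j _ /=.
by rewrite Blk_perm (perms_perm _ (rem_enum A j)).
Qed.

Fixpoint okl (c : R) (l : seq R) : bool :=
  if l is a :: l' then (c != 0) && okl (c + a) l' else true.
Fixpoint Wl (c : R) (l : seq R) : R :=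
  if l is a :: l' then c^-1 * Wl (c + a) l' else 1.

Lemma bwi_eq c w : c + \sum_(i <- w) x i = 0 -> w != [::] ->
  bwi c w = (okl c (map x w))%:R * Wl c (map x w).
Proof.
elim: w c => [|j w IH] c //= hs _.
case: (eqVneq c 0) => [->|c0].
  by rewrite invr0 !mul0r.
rewrite big_cons addrA in hs.
case: (eqVneq w [::]) => [w0|w0].
  move: hs; rewrite w0 big_nil addr0 => ->; by rewrite eqxx /= mul1r mulr1.
case: ifP => cj.
  rewrite (eqP cj) mulr0.
  by case: (w) w0 => // i w' _ /=; rewrite eqxx /= mul0r.
by rewrite IH // mulrCA.
Qed.

Lemma DsumS m (y : 'I_m.+1 -> R) i :
  Dsum i.+1 y = y ord0 + Dsum i (fun k => y (lift ord0 k)).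
Proof.
rewrite /Dsum big_mkcond big_ord_recl /= [in RHS]big_mkcond; congr (_ + _).
Qed.

Lemma Dsum0 m (y : 'I_m -> R) : Dsum 0 y = 0.
Proof. by rewrite /Dsum big_pred0. Qed.

Lemma okl_D m (y : 'I_m -> R) c :
  okl c (map y (enum 'I_m)) = \big[andb/true]_(i < m) (c + Dsum i y != 0).
Proof.
elim: m y c => [|m IH] y c; first by rewrite enum_ord0 big_ord0.
rewrite enum_ordSl /= -map_comp IH big_ord_recl Dsum0 addr0; congr (_ && _).
by apply: eq_bigr => i _; rewrite /= DsumS addrA.
Qed.

Lemma Wl_D m (y : 'I_m -> R) c :
  Wl c (map y (enum 'I_m)) = \prod_(i < m) (c + Dsum i y)^-1.
Proof.
elim: m y c => [|m IH] y c; first by rewrite enum_ord0 big_ord0.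
rewrite enum_ordSl /= -map_comp IH big_ord_recl Dsum0 addr0; congr (_ * _).
by apply: eq_bigr => i _; rewrite /= DsumS addrA.
Qed.

End Main.

Lemma bridge1 (R : realFieldType) n (G : seq 'I_n -> R) :
  \sum_(s : 'S_n) G (map s (enum 'I_n)) = \sum_(w <- permutations (enum 'I_n)) G w.
Proof.
rewrite -(big_map (fun s : 'S_n => map s (enum 'I_n)) xpredT G).
apply: perm_big; apply: uniq_perm.
- rewrite map_inj_uniq ?index_enum_uniq // => s1 s2 E.
  move: E => /eq_in_map E; apply/permP => i; apply: E; exact: mem_enum.
- exact: permutations_uniq.
move=> w; rewrite mem_permutations; apply/mapP/idP.
  case=> s _ ->; apply: uniq_perm; first by rewrite map_inj_uniq ?enum_uniq //; exact: perm_inj.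
    exact: enum_uniq.
  move=> i; rewrite mem_enum; apply/mapP; exists ((s^-1)%g i); first exact: mem_enum.
  by rewrite permKV.
move=> pw; have : perm_eq w (ord_tuple n) by rewrite val_ord_tuple.
move/tuple_permP => [p Ep]; exists p; first exact: mem_index_enum.
by rewrite Ep /=; apply: eq_map => i; rewrite tnth_ord_tuple.
Qed.

Lemma forall_big m (P : 'I_m.+1 -> bool) :
  [forall i : 'I_m.+1, (0 < i)%N ==> P i] = \big[andb/true]_(i < m) P (lift ord0 i).
Proof.
rewrite big_andE; apply/forallP/forallP => H i.
  by have := H (lift ord0 i).
by case: (unliftP ord0 i) => [j ->|->] //; have := H j.
Qed.

Lemma term_eq (R : realFieldType) n (x : 'I_n -> R) s : (1 < n)%N -> \sum_(i < n) x i = 0 ->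
  (allowed (pi_perm s x))%:R * Gn (pi_perm s x) = topF x (map s (enum 'I_n)).
Proof.
case: n x s => [//|m] x s n2 xs.
rewrite enum_ordSl map_cons [topF _ _]/topF bwi_eq; first last.
- by rewrite -size_eq0 !size_map -enumT size_enum_ord -lt0n.
- have H : \sum_(i <- map s (enum 'I_m.+1)) x i = 0.
    rewrite big_map -[RHS]xs big_enum /=.
    by rewrite [RHS](reindex_inj (@perm_inj _ s)).
  by move: H; rewrite enum_ordSl map_cons big_cons.
set pi := pi_perm s x.
have -> : [seq x i | i <- [seq s i | i <- [seq lift ord0 i | i <- enum 'I_m]]] =
          [seq pi (lift ord0 i) | i <- enum 'I_m] by rewrite -!map_comp.
have Ha : allowed pi = okl (x (s ord0)) [seq pi (lift ord0 i) | i <- enum 'I_m].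
  rewrite okl_D /allowed forall_big; apply: eq_bigr => i _; by rewrite DsumS.
have Hg : Gn pi = Wl (x (s ord0)) [seq pi (lift ord0 i) | i <- enum 'I_m].
  rewrite Wl_D /Gn big_add1 big_mkord; apply: eq_bigr => i _; by rewrite DsumS.
by rewrite Ha Hg.
Qed.

Theorem lemmaC4 (R : realFieldType) (n : nat) (x : 'I_n -> R) :
  (2 <= n)%N ->
  (forall i : 'I_n, x i != 0) ->
  \sum_(i < n) x i = 0 ->
  \sum_(s : 'S_n | allowed (pi_perm s x)) Gn (pi_perm s x) = 0.
Proof.
move=> n2 xn0 xs.
have xT : \sum_(i in [set: 'I_n]) x i = 0.
  by rewrite (eq_bigl xpredT) => [|i]; [exact: xs | rewrite in_setT].
rewrite big_mkcond /=.
rewrite (eq_bigr (fun s : 'S_n => topF x (map s (enum 'I_n)))); last first.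
  by move=> s _; rewrite -term_eq //; case: (allowed _); rewrite ?mul1r ?mul0r.
have pe : perm_eq (enum 'I_n) (enum [set: 'I_n]).
  apply: uniq_perm; rewrite ?enum_uniq // => i; by rewrite !mem_enum in_setT.
rewrite bridge1 (perms_perm _ pe) -Q_perm.
exact: mainQ.
Qed.
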